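(* Let $T:X\to Y$ be a bijective linear operator between Banach function spaces. Then $T$ is disjointness preserving if and only if $T^{-1}$ satisfies condition $(\beta)$.
   Context: A Banach function space is an order ideal of (equivalence classes of) measurable functions on a measure space equipped with a complete lattice norm; in particular it is a Dedekind complete Banach lattice. For a subset $A$ of a vector lattice $X$, $A^d=\{x\in X: |x|\wedge|a|=0 \text{ for all } a\in A\}$ and $A^{dd}=(A^d)^d$. For $a,b\in X$ we write $a\lhd b$ if $\{a\}^{dd}\subseteq\{b\}^{dd}$. A linear operator $S$ satisfies condition $(\beta)$ if $Sa\lhd Sb$ whenever $a\lhd b$. A linear operator is disjointness preserving if it maps disjoint elements to disjoint elements. *)

(* Defs.v *)
From HB Require Import structures.
From mathcomp Require Import all_boot all_order all_algebra.
From mathcomp Require Import all_classical all_reals all_analysis.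
Set Implicit Arguments. Unset Strict Implicit. Unset Printing Implicit Defensive.
Import Order.TTheory GRing.Theory Num.Theory numFieldNormedType.Exports.
Local Open Scope classical_set_scope.
Local Open Scope ring_scope.

(* Elements of L^0(mu) are represented by real measurable functions;
   equality of elements is equality mu-almost everywhere. *)
Section BFS.
Context (d : measure_display) (O : measurableType d) (R : realType)
  (mu : {measure set O -> \bar R}).

Definition aeeq (f g : O -> R) : Prop := {ae mu, forall x, f x = g x}.
Definition aele (f g : O -> R) : Prop := {ae mu, forall x, f x <= g x}.

Definition is_BFS (X : set (O -> R)) (rho : (O -> R) -> R) : Prop :=
  [/\ (forall f, X f -> measurable_fun setT f),
      X (fun=> 0),
      (forall f g, X f -> X g -> X (fun x => f x + g x)),
      (forall (c : R) f, X f -> X (fun x => c * f x)) &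
      (forall f (g : O -> R), X f -> measurable_fun setT g ->
         aele (fun x => `|g x|) (fun x => `|f x|) -> X g)]
  /\
  [/\ (forall f, X f -> 0 <= rho f),
      (forall f, X f -> (rho f = 0 <-> aeeq f (fun=> 0))),
      (forall (c : R) f, X f -> rho (fun x => c * f x) = `|c| * rho f),
      (forall f g, X f -> X g -> rho (fun x => f x + g x) <= rho f + rho g) &
      (forall f g, X f -> X g ->
         aele (fun x => `|f x|) (fun x => `|g x|) -> rho f <= rho g)]
  /\
      (forall u : nat -> O -> R, (forall n, X (u n)) ->
         (forall e : R, 0 < e -> exists N : nat, forall m n, (N <= m)%N -> (N <= n)%N ->
            rho (fun x => u m x - u n x) < e) ->
         exists f, X f /\ (fun n => rho (fun x => u n x - f x)) @ \oo --> (0 : R)).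

Definition disj (f g : O -> R) : Prop :=
  aeeq (fun x => Num.min `|f x| `|g x|) (fun=> 0).

Definition dcompl (X : set (O -> R)) (A : set (O -> R)) : set (O -> R) :=
  [set f | X f /\ forall a, A a -> disj f a].

Definition ddcompl X A := dcompl X (dcompl X A).

Definition lhd (X : set (O -> R)) (a b : O -> R) : Prop :=
  ddcompl X [set a] `<=` ddcompl X [set b].

End BFS.

Section Ops.
Context (d1 d2 : measure_display) (O1 : measurableType d1) (O2 : measurableType d2)
  (R : realType) (mu1 : {measure set O1 -> \bar R}) (mu2 : {measure set O2 -> \bar R}).

Definition is_linop (X : set (O1 -> R)) (Y : set (O2 -> R))
    (T : (O1 -> R) -> (O2 -> R)) : Prop :=
  [/\ (forall f, X f -> Y (T f)),
      (forall f g, X f -> X g -> aeeq mu1 f g -> aeeq mu2 (T f) (T g)),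
      (forall f g, X f -> X g ->
         aeeq mu2 (T (fun x => f x + g x)) (fun y => T f y + T g y)) &
      (forall (c : R) f, X f -> aeeq mu2 (T (fun x => c * f x)) (fun y => c * T f y))].

Definition is_bij (X : set (O1 -> R)) (Y : set (O2 -> R))
    (T : (O1 -> R) -> (O2 -> R)) : Prop :=
  (forall f g, X f -> X g -> aeeq mu2 (T f) (T g) -> aeeq mu1 f g) /\
  (forall g, Y g -> exists f, X f /\ aeeq mu2 (T f) g).

Definition is_inverse (X : set (O1 -> R)) (Y : set (O2 -> R))
    (T : (O1 -> R) -> (O2 -> R)) (S : (O2 -> R) -> (O1 -> R)) : Prop :=
  forall g, Y g -> X (S g) /\ aeeq mu2 (T (S g)) g.

Definition disj_preserving (X : set (O1 -> R)) (T : (O1 -> R) -> (O2 -> R)) : Prop :=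
  forall f g, X f -> X g -> disj mu1 f g -> disj mu2 (T f) (T g).

Definition cond_beta (Y : set (O2 -> R)) (X : set (O1 -> R))
    (S : (O2 -> R) -> (O1 -> R)) : Prop :=
  forall a b, Y a -> Y b -> lhd mu2 Y a b -> lhd mu1 X (S a) (S b).

End Ops.

(* Main.v *)
Require Import Defs.
From HB Require Import structures.
From mathcomp Require Import all_boot all_order all_algebra.
From mathcomp Require Import all_classical all_reals all_analysis.
Import Order.TTheory GRing.Theory Num.Theory numFieldNormedType.Exports.
Local Open Scope classical_set_scope.
Local Open Scope ring_scope.

Lemma min0P {R : realType} (a b : R) : 0 <= a -> 0 <= b -> Num.min a b = 0 -> a = 0 \/ b = 0.
Proof. by move=> a0 b0; case: (leP a b) => _ ->; [left|right]. Qed.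

Lemma min0l {R : realType} (b : R) : 0 <= b -> Num.min 0 b = 0.
Proof. by move=> b0; case: (leP 0 b) => // bl; apply/eqP; rewrite eq_le b0 ltW. Qed.

Lemma min0r {R : realType} (b : R) : 0 <= b -> Num.min b 0 = 0.
Proof. by move=> b0; rewrite minC min0l. Qed.

Set Implicit Arguments.
Lemma minn0P {R : realType} {a b : R} : Num.min `|a| `|b| = 0 -> a = 0 \/ b = 0.
Proof. by move/min0P => /(_ (normr_ge0 _) (normr_ge0 _)) [] /normr0_eq0; [left|right]. Qed.

Section H.
Context (d : measure_display) (O : measurableType d) (R : realType)
  (mu : {measure set O -> \bar R}).

Lemma aeeq_sym (f g : O -> R) : aeeq mu f g -> aeeq mu g f.
Proof. by apply: filterS => x ->. Qed.

Lemma aeeq_trans (f g h : O -> R) : aeeq mu f g -> aeeq mu g h -> aeeq mu f h.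
Proof. by move=> H1 H2; apply: filterS2 H1 H2 => x -> ->. Qed.

Lemma disj_sym (f g : O -> R) : disj mu f g -> disj mu g f.
Proof. by apply: filterS => x; rewrite minC. Qed.

Lemma disj_aeeqr (f b b' : O -> R) : aeeq mu b b' -> disj mu f b -> disj mu f b'.
Proof. by move=> H1 H2; apply: filterS2 H1 H2 => x ->. Qed.

Lemma disj_self (f : O -> R) : disj mu f f -> aeeq mu f (fun=> 0).
Proof. by apply: filterS => x; rewrite minxx => /normr0_eq0 ->. Qed.

Lemma lhdP (X : set (O -> R)) a b : X a -> lhd mu X a b ->
  forall g, X g -> disj mu g b -> disj mu g a.
Proof.
move=> Xa H g Xg gb.
have Ha : ddcompl mu X [set a] a.
  split => // c [_ Hc]; apply: disj_sym; exact: Hc.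
have [_ Hb] := H a Ha.
apply: disj_sym; apply: Hb; split => // a' ->; exact: gb.
Qed.

Lemma lhdI (X : set (O -> R)) a b :
  (forall g, X g -> disj mu g b -> disj mu g a) -> lhd mu X a b.
Proof.
move=> H f [Xf Hf]; split => // c [Xc Hc]; apply: Hf; split => // a' ->.
apply: H => //; exact: Hc.
Qed.
End H.

Theorem corollary3p5 (R : realType)
  (d1 : measure_display) (O1 : measurableType d1) (mu1 : {measure set O1 -> \bar R})
  (d2 : measure_display) (O2 : measurableType d2) (mu2 : {measure set O2 -> \bar R})
  (X : set (O1 -> R)) (rhoX : (O1 -> R) -> R)
  (Y : set (O2 -> R)) (rhoY : (O2 -> R) -> R)
  (T : (O1 -> R) -> (O2 -> R)) (Tinv : (O2 -> R) -> (O1 -> R)) :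
  is_BFS mu1 X rhoX -> is_BFS mu2 Y rhoY ->
  is_linop mu1 mu2 X Y T -> is_bij mu1 mu2 X Y T ->
  is_inverse mu2 X Y T Tinv ->
  (disj_preserving mu1 mu2 X T <-> cond_beta mu1 mu2 Y X Tinv).
Proof.
move=> [[Xm X0 XD XZ Xid] _] [[Ym Y0 YD YZ Yid] _] [TXY Tae Tadd Tsc]
  [Tinj _] Tinv_inv.
have T0 : aeeq mu2 (T (fun=> 0)) (fun=> 0).
  have := Tsc 0 (fun=> 0) X0.
  have -> : (fun x : O1 => (0:R) * 0) = fun=> 0 by apply: funext => x; rewrite mul0r.
  by apply: filterS => y ->; rewrite mul0r.
have STf : forall f, X f -> aeeq mu1 (Tinv (T f)) f.
  move=> f Xf; have [XS HS] := Tinv_inv _ (TXY f Xf); exact: Tinj.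
split.
- move=> DP a b Ya Yb Hab.
  have [Xsa Tsa] := Tinv_inv a Ya; have [Xsb Tsb] := Tinv_inv b Yb.
  apply: lhdI => h Xh hb.
  set sa := Tinv a.
  pose k := fun x => if h x == 0 then 0 else sa x.
  pose k' := fun x => if h x == 0 then sa x else 0.
  have mk : measurable_fun setT k.
    apply: measurable_fun_if => //; first by apply: (@measurable_realfun.measurable_fun_eqr _ _ _ _ h (fun=> 0)) => //; exact: Xm.
    exact: measurable_funS (Xm _ Xsa).
  have mk' : measurable_fun setT k'.
    apply: measurable_fun_if => //; first by apply: (@measurable_realfun.measurable_fun_eqr _ _ _ _ h (fun=> 0)) => //; exact: Xm.
    exact: measurable_funS (Xm _ Xsa).
  have Xk : X k.
    apply: (Xid sa) => //; apply: aeW => x; rewrite /k; case: ifP => _ //.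
    by rewrite normr0.
  have Xk' : X k'.
    apply: (Xid sa) => //; apply: aeW => x; rewrite /k'; case: ifP => _ //.
    by rewrite normr0.
  have kk' : disj mu1 k k'.
    apply: aeW => x; rewrite /k /k'; case: ifP => _; rewrite normr0.
      by rewrite min0l.
    by rewrite min0r.
  have kb : disj mu1 k (Tinv b).
    apply: filterS hb => x; rewrite /k; case: ifP => [_|/negbT hx].
      by rewrite normr0 min0l.
    move/minn0P => [] //; first by move/eqP; rewrite (negbTE hx).
    by move=> ->; rewrite normr0 min0r.
  have Tkb : disj mu2 (T k) b.
    apply: (disj_aeeqr Tsb); exact: DP.
  have Tka : disj mu2 (T k) a.
    exact: (lhdP Ya Hab (TXY _ Xk) Tkb).
  have Tkk' := DP _ _ Xk Xk' kk'.
  have ska : sa = (fun x => k x + k' x).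
    by apply: funext => x; rewrite /k /k'; case: ifP => _; rewrite ?add0r ?addr0.
  have aT : aeeq mu2 a (fun y => T k y + T k' y).
    apply: aeeq_trans (aeeq_sym Tsa) _; rewrite -/sa ska; exact: Tadd.
  have Tk0 : aeeq mu2 (T k) (T (fun=> 0)).
    apply: aeeq_trans (aeeq_sym T0).
    apply: filterS3 Tka Tkk' aT => x H1 H2 H3.
    case: (minn0P H2) => // H4.
    by move: H1; rewrite H3 H4 addr0 minxx => /normr0_eq0.
  have k0 := Tinj _ _ Xk X0 Tk0.
  apply: filterS k0 => x; rewrite /k; case: ifP => [/eqP -> _|_ ->].
    by rewrite normr0 min0l.
  by rewrite normr0 min0r.
- move=> B f g Xf Xg fg.
  set u := T f; set v := T g.
  pose w := fun y => Num.min `|u y| `|v y|.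
  have Yu : Y u by exact: TXY.
  have Yv : Y v by exact: TXY.
  have mw : measurable_fun setT w.
    apply: (@measurable_realfun.measurable_minr _ _ _ _ (fun y => `|u y|) (fun y => `|v y|)).
      exact: (measurableT_comp (@measurable_realfun.normr_measurable R setT) (Ym _ Yu)).
    exact: (measurableT_comp (@measurable_realfun.normr_measurable R setT) (Ym _ Yv)).
  have w0 : forall y, 0 <= w y.
    by move=> y; rewrite /w le_min !normr_ge0.
  have Yw : Y w.
    apply: (Yid u) => //; apply: aeW => y; rewrite ger0_norm //.
    by rewrite /w ge_min lexx.
  have Hgen : forall z, (forall y, z y = 0 -> w y = 0) -> lhd mu2 Y w z.
    move=> z Hz; apply: lhdI => g' _; apply: filterS => y.
    move/minn0P => [->|/Hz ->]; rewrite normr0.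
      by rewrite min0l.
    by rewrite min0r.
  have wu : lhd mu2 Y w u.
    by apply: Hgen => y Hy; rewrite /w Hy normr0 min0l.
  have wv : lhd mu2 Y w v.
    by apply: Hgen => y Hy; rewrite /w Hy normr0 min0r.
  have [Xsw Tsw] := Tinv_inv w Yw.
  have Bu := B _ _ Yw Yu wu.
  have Bv := B _ _ Yw Yv wv.
  have gsu : disj mu1 g (Tinv u).
    apply: (disj_aeeqr (aeeq_sym (STf _ Xf))); exact: disj_sym.
  have gsw := lhdP Xsw Bu Xg gsu.
  have swsv : disj mu1 (Tinv w) (Tinv v).
    apply: (disj_aeeqr (aeeq_sym (STf _ Xg))); exact: disj_sym.
  have swsw := lhdP Xsw Bv Xsw swsv.
  have sw0 := disj_self swsw.
  have := Tae _ _ Xsw X0 sw0.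
  move=> H; have H2 := aeeq_trans (aeeq_trans (aeeq_sym Tsw) H) T0.
  exact: H2.
Qed.
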